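(* For a connected cubic graph $G$, the following are equivalent: (a) $G$ is bipartite; (b) $1$ is an eigenvalue of the truncation $T(G)$; (c) $1$ is a simple eigenvalue of $T(G)$.
   Context: The truncation $T(G)$ of a cubic multigraph $G$ is the cubic graph in which every vertex $v$ of $G$ is replaced by a triangle whose three vertices correspond to the three edge-ends at $v$, and every edge $uv$ of $G$ gives an edge of $T(G)$ joining the corresponding vertices of the triangles of $u$ and $v$ (equivalently, $T(G)$ is the line graph of the subdivision of $G$). Eigenvalues are those of the adjacency matrix; simple means a $1$-dimensional eigenspace. *)

(* Defs.v *)
From mathcomp Require Import all_boot all_order all_algebra.
From mathcomp Require Import algC.
Set Implicit Arguments. Unset Strict Implicit. Unset Printing Implicit Defensive.
Import GRing.Theory Num.Theory.
Local Open Scope ring_scope.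

Definition simple_graph (V : finType) (e : rel V) : Prop :=
  symmetric e /\ irreflexive e.

Definition cubic (V : finType) (e : rel V) : Prop :=
  forall v : V, #|[set w | e v w]|%N = 3%N.

Definition connected (V : finType) (e : rel V) : Prop :=
  forall u v : V, connect e u v.

Definition bipartite (V : finType) (e : rel V) : Prop :=
  exists c : V -> bool, forall u v, e u v -> c u != c v.

(* Vertices of the truncation T(G): the edge-ends (darts) (u,v) with uv an
   edge; the dart (u,v) is the vertex of the triangle of u corresponding to
   the edge uv. *)
Definition dart (V : finType) (e : rel V) : finType := {p : V * V | e p.1 p.2}.

(* Adjacency in T(G): two distinct darts at the same vertex (triangle edges),
   or the two ends (u,v),(v,u) of one edge of G. *)
Definition trunc_adj (V : finType) (e : rel V) (x y : dart e) : bool :=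
  (((val x).1 == (val y).1) && (x != y))
  || (((val x).1 == (val y).2) && ((val x).2 == (val y).1)).

Definition trunc_adjmx (V : finType) (e : rel V) : 'M[algC]_#|dart e| :=
  \matrix_(i, j) (trunc_adj (enum_val i) (enum_val j))%:R.

Definition is_eigenvalue (n : nat) (A : 'M[algC]_n) (a : algC) : Prop :=
  eigenvalue A a.

Definition simple_eigenvalue (n : nat) (A : 'M[algC]_n) (a : algC) : Prop :=
  \rank (eigenspace A a) = 1%N.

(* Main.v *)
Require Import Defs.
From mathcomp Require Import all_boot all_order all_algebra.
From mathcomp Require Import algC ring.
Set Implicit Arguments. Unset Strict Implicit. Unset Printing Implicit Defensive.
Import GRing.Theory Num.Theory.
Local Open Scope ring_scope.

Section Core.
Variables (V : finType) (e : rel V).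
Hypothesis esym : symmetric e.
Hypothesis eirr : irreflexive e.
Hypothesis ecub : cubic e.

Lemma rev_proof (d : dart e) : e (val d).2 (val d).1.
Proof. by rewrite esym; exact: (valP d). Qed.
Definition drev (d : dart e) : dart e := exist _ ((val d).2, (val d).1) (rev_proof d).

Lemma drevK : involutive drev.
Proof. by move=> d; apply: val_inj; case: d => [[a b] ?]. Qed.

Definition ssum (X : dart e -> algC) u := \sum_(d | (val d).1 == u) X d.

Lemma adj_sum (X : dart e -> algC) d :
  \sum_d' X d' * (trunc_adj d' d)%:R = ssum X (val d).1 - X d + X (drev d).
Proof.
have split_ : forall d', (trunc_adj d' d)%:R =
   (((val d').1 == (val d).1) && (d' != d))%:R + (d' == drev d)%:R :> algC.
  move=> d'; rewrite /trunc_adj.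
  have -> : (((val d').1 == (val d).2) && ((val d').2 == (val d).1)) = (d' == drev d).
    by case: d' => [[a b] ?]; case: d => [[c f] ?]; rewrite /= -val_eqE /= xpair_eqE.
  case E: (d' == drev d); last by rewrite orbF addr0.
  rewrite (eqP E) /= orbT.
  suff -> : ((val d).2 == (val d).1) = false by rewrite /= add0r.
  by apply/negbTE/eqP => h; have := valP d; rewrite /= h eirr.
have mb : forall (x : algC) (b : bool), x * b%:R = if b then x else 0.
  by move=> x [|]; rewrite ?mulr1 ?mulr0.
under eq_bigr do rewrite split_ mulrDr !mb.
rewrite big_split /= -!big_mkcond /= big_pred1_eq.
rewrite /ssum [X in _ = X - _ + _](bigD1 d) //=; ring.
Qed.

Lemma card_darts u : #|[set d : dart e | (val d).1 == u]| = 3%N.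
Proof.
rewrite -(ecub u).
have -> : [set w | e u w] = (fun d : dart e => (val d).2) @: [set d : dart e | (val d).1 == u].
  apply/setP => w; rewrite inE; apply/idP/imsetP.
    move=> h; exists (exist _ (u, w) h) => //; by rewrite inE.
  by case=> [[[a b] /= h]]; rewrite inE /= => /eqP <- ->.
rewrite card_in_imset //.
move=> [[a b] pa] [[c f] pc]; rewrite !inE /= => /eqP h1 /eqP h2 h3.
by apply/val_inj => /=; rewrite h1 h2 h3.
Qed.

Lemma sum_const3 u (c : algC) : \sum_(d : dart e | (val d).1 == u) c = c *+ 3.
Proof.
rewrite -(card_darts u) -sumr_const; apply: eq_bigl => d; by rewrite inE.
Qed.

Variable X : dart e -> algC.
Hypothesis HX : forall d, \sum_d' X d' * (trunc_adj d' d)%:R = X d.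

Lemma E1 (d : dart e) : X d = ssum X (val d).1 - X d + X (drev d).
Proof. by rewrite -adj_sum HX. Qed.

Lemma E2 (d : dart e) : 3 * X d = 2 * ssum X (val d).1 + ssum X (val d).2.
Proof.
have /eqP h1 := E1 d; have /eqP h2 := E1 (drev d).
rewrite drevK /= in h2.
rewrite -subr_eq0 in h1; rewrite -subr_eq0 in h2.
apply/eqP; rewrite -subr_eq0; apply/eqP.
transitivity (2 * (X d - (ssum X (val d).1 - X d + X (drev d))) +
   (X (drev d) - (ssum X (val d).2 - X (drev d) + X d))); first ring.
by rewrite (eqP h1) (eqP h2); ring.
Qed.

Lemma Ksum u : \sum_(d : dart e | (val d).1 == u) (ssum X (val d).1 + ssum X (val d).2) = 0.
Proof.
transitivity (\sum_(d : dart e | (val d).1 == u) (3 * X d - ssum X u)).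
  apply: eq_bigr => d /eqP hd; rewrite E2 hd; ring.
by rewrite sumrB -mulr_sumr sum_const3 -/(ssum X u) mulr_natl subrr.
Qed.

Lemma C1 (d : dart e) : ssum X (val d).1 + ssum X (val d).2 = 0.
Proof.
pose t := fun d : dart e => ssum X (val d).1 + ssum X (val d).2.
have A1 : \sum_(d : dart e) t d * (ssum X (val d).1)^* = 0.
  rewrite (partition_big (fun d : dart e => (val d).1) xpredT) //=.
  apply: big1 => u _.
  rewrite (eq_bigr (fun d => t d * (ssum X u)^* )); last by move=> i /= /eqP ->.
  by rewrite -mulr_suml (eq_bigl (fun d : dart e => (val d).1 == u)) // Ksum mul0r.
have A2 : \sum_(d : dart e) t d * (ssum X (val d).2)^* = 0.
  rewrite (reindex_inj (inv_inj drevK)) /=.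
  transitivity (\sum_(d : dart e) t d * (ssum X (val d).1)^*); last exact: A1.
  apply: eq_bigr => i _.
  by rewrite /t /= addrC.
have Hsum : \sum_(d : dart e) t d * (t d)^* = 0.
  rewrite (eq_bigr (fun d => t d * (ssum X (val d).1)^* + t d * (ssum X (val d).2)^*)).
    by rewrite big_split /= A1 A2 addr0.
  by move=> i _; rewrite {3}/t rmorphD mulrDr.
have H0 := psumr_eq0P (fun i _ => mul_conjC_ge0 (t i)) Hsum.
have := H0 d isT.
by move/eqP; rewrite mul_conjC_eq0 => /eqP.
Qed.

Lemma C2 (d : dart e) : 3 * X d = ssum X (val d).1.
Proof.
rewrite E2.
have -> : 2 * ssum X (val d).1 + ssum X (val d).2 =
  ssum X (val d).1 + (ssum X (val d).1 + ssum X (val d).2) by ring.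
by rewrite C1 addr0.
Qed.
End Core.

Lemma conn_zero (V : finType) (e : rel V) (f : V -> algC) :
  (forall u w, e u w -> f u + f w = 0) -> connected e ->
  forall v0, f v0 = 0 -> forall w, f w = 0.
Proof.
move=> H Hc v0 h0 w.
have cl : closed e [pred z | f z == 0].
  move=> x y exy; rewrite !inE.
  have /eqP := H x y exy; rewrite addr_eq0 => /eqP ->.
  by rewrite oppr_eq0.
have := closed_connect cl (Hc v0 w); rewrite !inE h0 eqxx.
by move/esym/eqP.
Qed.

Lemma conn_pm (V : finType) (e : rel V) (f : V -> algC) :
  (forall u w, e u w -> f u + f w = 0) -> connected e ->
  forall v0 w, (f w == f v0) || (f w == - f v0).
Proof.
move=> H Hc v0 w.
have cl : closed e [pred z | (f z == f v0) || (f z == - f v0)].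
  move=> x y exy; rewrite !inE.
  have /eqP := H x y exy; rewrite addr_eq0 => /eqP ->.
  by rewrite eqr_oppLR eqr_opp orbC.
by have := closed_connect cl (Hc v0 w); rewrite !inE eqxx /= => <-.
Qed.

Definition xf (V : finType) (e : rel V) (x : 'rV[algC]_#|dart e|) (d : dart e) :=
  x 0 (enum_rank d).

Lemma bridge (V : finType) (e : rel V) (x : 'rV[algC]_#|dart e|) d :
  (x *m trunc_adjmx e) 0 (enum_rank d) =
  \sum_d' xf x d' * (trunc_adj d' d)%:R.
Proof.
rewrite mxE (reindex enum_rank) /=; last by exists enum_val => ? _; rewrite ?enum_rankK ?enum_valK.
by apply: eq_bigr => d' _; rewrite mxE !enum_rankK.
Qed.

Lemma eig_HX (V : finType) (e : rel V) (x : 'rV[algC]_#|dart e|) :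
  x *m trunc_adjmx e = x ->
  forall d, \sum_d' xf x d' * (trunc_adj d' d)%:R = xf x d.
Proof. by move=> h d; rewrite -bridge h. Qed.

Lemma zero_of_s (V : finType) (e : rel V) (v0 : V) (x : 'rV[algC]_#|dart e|) :
  simple_graph e -> cubic e -> connected e ->
  x *m trunc_adjmx e = x -> ssum (xf x) v0 = 0 -> x = 0.
Proof.
move=> [esym eirr] ecub econn hx hs.
have HX := eig_HX hx.
have Hc : forall u w, e u w -> ssum (xf x) u + ssum (xf x) w = 0.
  by move=> u w euw; exact: (C1 esym eirr ecub HX (exist _ (u, w) euw)).
have Z := conn_zero Hc econn hs.
apply/rowP => i; rewrite mxE.
have := C2 esym eirr ecub HX (enum_val i).
rewrite Z /xf enum_valK => /eqP; rewrite mulf_eq0 pnatr_eq0 /=.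
by move/eqP.
Qed.

Lemma neg_self (a : algC) : a != 0 -> (- a == a) = false.
Proof.
move=> h; apply/negbTE; apply: contra h => /eqP h'.
have : a *+ 2 == 0 by rewrite mulr2n -{1}h' addNr.
by rewrite mulrn_eq0.
Qed.

Lemma a_to_b (V : finType) (e : rel V) (v0 : V) :
  simple_graph e -> cubic e -> bipartite e -> eigenvalue (trunc_adjmx e) 1.
Proof.
move=> [esym eirr] ecub [c hc].
pose sg u : algC := if c u then 1 else -1.
pose x := \row_(i < #|dart e|) sg (val (enum_val i)).1.
have xE : forall d, xf x d = sg (val d).1 by move=> d; rewrite /xf mxE enum_rankK.
have [w ew] : exists w, e v0 w.
  have : (0 < #|[set w | e v0 w]|)%N by rewrite ecub.
  by rewrite card_gt0 => /set0Pn [w]; rewrite inE => ?; exists w.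
apply/eigenvalueP; exists x.
  apply/rowP => j; rewrite scale1r -(enum_valK j) bridge.
  set d := enum_val j.
  rewrite (eq_bigr (fun d' => sg (val d').1 * (trunc_adj d' d)%:R)); last first.
    by move=> d' _; rewrite xE.
  rewrite (adj_sum esym eirr (fun d' => sg (val d').1)) -/(xf x d) xE /=.
  have -> : ssum (fun d' : dart e => sg (val d').1) (val d).1 = sg (val d).1 *+ 3.
    by rewrite /ssum -(sum_const3 ecub (val d).1); apply: eq_bigr => d' /eqP ->.
  have : c (val d).1 != c (val d).2 by apply: hc; exact: (valP d).
  by rewrite /sg; case: (c _); case: (c _) => //= _; rewrite ?mulr3n; ring.
apply/negP => /eqP h.
have := congr1 (fun m : 'rV_#|dart e| => m 0 (enum_rank (exist _ (v0, w) ew : dart e))) h.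
by rewrite /= !mxE enum_rankK /= /sg; case: (c v0) => /eqP; rewrite ?oner_eq0 ?oppr_eq0 ?oner_eq0.
Qed.

Lemma b_to_a (V : finType) (e : rel V) (v0 : V) :
  simple_graph e -> cubic e -> connected e ->
  eigenvalue (trunc_adjmx e) 1 -> bipartite e.
Proof.
move=> [esym eirr] ecub econn /eigenvalueP [x hx nz].
rewrite scale1r in hx.
have HX := eig_HX hx.
have Hc : forall u w, e u w -> ssum (xf x) u + ssum (xf x) w = 0.
  by move=> u w euw; exact: (C1 esym eirr ecub HX (exist _ (u, w) euw)).
have s0 : ssum (xf x) v0 != 0.
  apply: contra nz => /eqP h; apply/eqP; exact: (zero_of_s (conj esym eirr) ecub econn hx h).
exists (fun u => ssum (xf x) u == ssum (xf x) v0) => u w euw.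
have hw : ssum (xf x) w = - ssum (xf x) u.
  by apply/eqP; rewrite -addr_eq0 addrC Hc.
have := conn_pm Hc econn v0 u.
case/orP => /eqP hu; rewrite hw hu ?eqxx ?opprK ?neg_self //.
by rewrite eqxx.
Qed.

Lemma b_to_c (V : finType) (e : rel V) (v0 : V) :
  simple_graph e -> cubic e -> connected e ->
  eigenvalue (trunc_adjmx e) 1 -> \rank (eigenspace (trunc_adjmx e) 1) = 1%N.
Proof.
move=> sg ecub econn hev.
have [esym eirr] := sg.
have [y hy nzy] := eigenvalueP hev.
rewrite scale1r in hy.
have sy : ssum (xf y) v0 != 0.
  apply: contra nzy => /eqP h; apply/eqP; exact: (zero_of_s sg ecub econn hy h).
apply/eqP; rewrite eqn_leq; apply/andP; split; last first.
  by rewrite lt0n mxrank_eq0.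
apply: leq_trans (mxrankS (_ : (eigenspace (trunc_adjmx e) 1 <= y)%MS)) (rank_leq_row y).
apply/row_subP => i.
set r := row i _.
have /eigenspaceP hr : (r <= eigenspace (trunc_adjmx e) 1)%MS by exact: row_sub.
rewrite scale1r in hr.
pose z := ssum (xf y) v0 *: r - ssum (xf r) v0 *: y.
have hz : z *m trunc_adjmx e = z by rewrite /z mulmxBl -!scalemxAl hr hy.
have lin : forall d, xf z d = ssum (xf y) v0 * xf r d - ssum (xf r) v0 * xf y d.
  by move=> d; rewrite /xf !mxE.
have sz : ssum (xf z) v0 = 0.
  rewrite /ssum (eq_bigr _ (fun d _ => lin d)) sumrB -!mulr_sumr.
  by rewrite -/(ssum (xf r) v0) -/(ssum (xf y) v0) mulrC subrr.
have := zero_of_s sg ecub econn hz sz.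
move/eqP; rewrite subr_eq0 => /eqP hrz.
have -> : r = (ssum (xf r) v0 / ssum (xf y) v0) *: y.
  by rewrite mulrC -scalerA -hrz scalerA mulVf ?scale1r.
by rewrite scalemx_sub.
Qed.

Theorem corollary6p3 (V : finType) (e : rel V) (v0 : V) :
  simple_graph e -> cubic e -> connected e ->
  (bipartite e <-> is_eigenvalue (trunc_adjmx e) 1) /\
  (is_eigenvalue (trunc_adjmx e) 1 <-> simple_eigenvalue (trunc_adjmx e) 1).
Proof.
move=> sg ecub econn; rewrite /is_eigenvalue /simple_eigenvalue; split; split.
- exact: a_to_b v0 sg ecub.
- exact: b_to_a v0 sg ecub econn.
- exact: b_to_c v0 sg ecub econn.
- by move=> h; rewrite /eigenvalue -mxrank_eq0 h.
Qed.
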